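(* Let $\mathbf{M}$ be a unital commutative distributive $\ell$-monoid. Then $\mathbf{M}$ is isomorphic to a subalgebra of the $\{+,\vee,\wedge,0,1,-1\}$-reduct of a unital abelian $\ell$-group if and only if $\Gamma(\mathbf{M})$ is isomorphic to a subalgebra of the $\{\oplus,\odot,\vee,\wedge,0,1\}$-reduct of an MV-algebra.
   Context: A \emph{unital commutative distributive $\ell$-monoid} is an algebra $\langle M,+,\vee,\wedge,0,1,-1\rangle$ (arities $2,2,2,0,0,0$) such that: $\langle M,\vee,\wedge\rangle$ is a distributive lattice (with order $\le$); $\langle M,+,0\rangle$ is a commutative monoid; $+$ distributes over $\vee$ and $\wedge$; $-1+1=0$; $-1\le 0\le 1$; and for every $x\in M$ there is $n\in\mathbb{N}\setminus\{0\}$ with $(-1)+\dots+(-1)\le x\le 1+\dots+1$ ($n$ summands each). $\Gamma(\mathbf{M})$ denotes $\{x\in M\mid 0\le x\le 1\}$ with $\vee,\wedge,0,1$ restricted and $x\oplus y:=(x+y)\wedge 1$, $x\odot y:=(x+y+(-1))\vee 0$. MV-algebras are taken in the signature $\{\oplus,\odot,\vee,\wedge,\neg,0,1\}$ with $1=\neg0$, $x\odot y=\neg(\neg x\oplus\neg y)$, $x\vee y=(x\odot\neg y)\oplus y$, $x\wedge y=\neg(\neg x\vee\neg y)$. A unital abelian $\ell$-group is a commutative lattice-ordered group with a distinguished strong unit $1\ge 0$ (for every $g$ some $n$ has $g\le n\cdot 1$), with $-1$ its inverse. *)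

(* Defs.v *)
From Stdlib Require Import Arith.

Set Implicit Arguments.

Record UCDLMonoid (M : Type) := {
  m_add  : M -> M -> M;
  m_join : M -> M -> M;
  m_meet : M -> M -> M;
  m_zero : M;
  m_one  : M;
  m_mone : M;
  m_joinA : forall x y z, m_join x (m_join y z) = m_join (m_join x y) z;
  m_meetA : forall x y z, m_meet x (m_meet y z) = m_meet (m_meet x y) z;
  m_joinC : forall x y, m_join x y = m_join y x;
  m_meetC : forall x y, m_meet x y = m_meet y x;
  m_absJ  : forall x y, m_join x (m_meet x y) = x;
  m_absM  : forall x y, m_meet x (m_join x y) = x;
  m_distr : forall x y z, m_meet x (m_join y z) = m_join (m_meet x y) (m_meet x z);
  m_addA : forall x y z, m_add x (m_add y z) = m_add (m_add x y) z;
  m_addC : forall x y, m_add x y = m_add y x;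
  m_add0 : forall x, m_add x m_zero = x;
  m_addJ : forall x y z, m_add x (m_join y z) = m_join (m_add x y) (m_add x z);
  m_addM : forall x y z, m_add x (m_meet y z) = m_meet (m_add x y) (m_add x z);
  m_mone_one : m_add m_mone m_one = m_zero;
  (* -1 <= 0 <= 1  (x <= y  iff  x \/ y = y) *)
  m_mone_le0 : m_join m_mone m_zero = m_zero;
  m_zero_le1 : m_join m_zero m_one = m_one;
  m_bounded : forall x, exists n, 0 < n /\
     m_join (Nat.iter n (m_add m_mone) m_zero) x = x /\
     m_join x (Nat.iter n (m_add m_one) m_zero) = Nat.iter n (m_add m_one) m_zero
}.

Definition m_le (M : Type) (A : UCDLMonoid M) (x y : M) : Prop := m_join A x y = y.

Record UAbLGroup (G : Type) := {
  g_add  : G -> G -> G;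
  g_opp  : G -> G;
  g_zero : G;
  g_join : G -> G -> G;
  g_meet : G -> G -> G;
  g_one  : G;
  g_addA : forall x y z, g_add x (g_add y z) = g_add (g_add x y) z;
  g_addC : forall x y, g_add x y = g_add y x;
  g_add0 : forall x, g_add x g_zero = x;
  g_addN : forall x, g_add x (g_opp x) = g_zero;
  g_joinA : forall x y z, g_join x (g_join y z) = g_join (g_join x y) z;
  g_meetA : forall x y z, g_meet x (g_meet y z) = g_meet (g_meet x y) z;
  g_joinC : forall x y, g_join x y = g_join y x;
  g_meetC : forall x y, g_meet x y = g_meet y x;
  g_absJ  : forall x y, g_join x (g_meet x y) = x;
  g_absM  : forall x y, g_meet x (g_join x y) = x;
  g_mono : forall x y z, g_join x y = y -> g_join (g_add x z) (g_add y z) = g_add y z;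
  g_one_ge0 : g_join g_zero g_one = g_one;
  g_strong : forall x, exists n,
     g_join x (Nat.iter n (g_add g_one) g_zero) = Nat.iter n (g_add g_one) g_zero
}.

Record MVAlgebra (A : Type) := {
  mv_oplus : A -> A -> A;
  mv_odot  : A -> A -> A;
  mv_join  : A -> A -> A;
  mv_meet  : A -> A -> A;
  mv_neg   : A -> A;
  mv_zero  : A;
  mv_one   : A;
  mv_oplusA : forall x y z, mv_oplus x (mv_oplus y z) = mv_oplus (mv_oplus x y) z;
  mv_oplusC : forall x y, mv_oplus x y = mv_oplus y x;
  mv_oplus0 : forall x, mv_oplus x mv_zero = x;
  mv_negK   : forall x, mv_neg (mv_neg x) = x;
  mv_oplus_neg0 : forall x, mv_oplus x (mv_neg mv_zero) = mv_neg mv_zero;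
  mv_luk : forall x y, mv_oplus (mv_neg (mv_oplus (mv_neg x) y)) y
                     = mv_oplus (mv_neg (mv_oplus (mv_neg y) x)) x;
  mv_oneE  : mv_one = mv_neg mv_zero;
  mv_odotE : forall x y, mv_odot x y = mv_neg (mv_oplus (mv_neg x) (mv_neg y));
  mv_joinE : forall x y, mv_join x y = mv_oplus (mv_odot x (mv_neg y)) y;
  mv_meetE : forall x y, mv_meet x y = mv_neg (mv_join (mv_neg x) (mv_neg y))
}.

Definition embeds_in_ulgroup (M : Type) (A : UCDLMonoid M) : Prop :=
  exists (G : Type) (L : UAbLGroup G) (f : M -> G),
    (forall x y, f x = f y -> x = y) /\
    (forall x y, f (m_add A x y) = g_add L (f x) (f y)) /\
    (forall x y, f (m_join A x y) = g_join L (f x) (f y)) /\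
    (forall x y, f (m_meet A x y) = g_meet L (f x) (f y)) /\
    f (m_zero A) = g_zero L /\
    f (m_one A) = g_one L /\
    f (m_mone A) = g_opp L (g_one L).

Definition in_Gamma (M : Type) (A : UCDLMonoid M) (x : M) : Prop :=
  m_le A (m_zero A) x /\ m_le A x (m_one A).

Definition Gamma_oplus (M : Type) (A : UCDLMonoid M) (x y : M) : M :=
  m_meet A (m_add A x y) (m_one A).

Definition Gamma_odot (M : Type) (A : UCDLMonoid M) (x y : M) : M :=
  m_join A (m_add A (m_add A x y) (m_mone A)) (m_zero A).

(** Gamma(M) embeds into the {(+),(.),\/,/\,0,1}-reduct of an MV-algebra:
    a map defined on M whose restriction to Gamma(M) is an injective
    homomorphism (only its values on Gamma(M) matter). *)
Definition Gamma_embeds_in_MV (M : Type) (A : UCDLMonoid M) : Prop :=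
  exists (B : Type) (V : MVAlgebra B) (f : M -> B),
    (forall x y, in_Gamma A x -> in_Gamma A y -> f x = f y -> x = y) /\
    (forall x y, in_Gamma A x -> in_Gamma A y ->
       f (Gamma_oplus A x y) = mv_oplus V (f x) (f y)) /\
    (forall x y, in_Gamma A x -> in_Gamma A y ->
       f (Gamma_odot A x y) = mv_odot V (f x) (f y)) /\
    (forall x y, in_Gamma A x -> in_Gamma A y ->
       f (m_join A x y) = mv_join V (f x) (f y)) /\
    (forall x y, in_Gamma A x -> in_Gamma A y ->
       f (m_meet A x y) = mv_meet V (f x) (f y)) /\
    f (m_zero A) = mv_zero V /\
    f (m_one A) = mv_one V.

(* Main.v *)
Require Import Defs.
From Stdlib Require Import List Arith ClassicalEpsilon ProofIrrelevance FunctionalExtensionality PropExtensionality.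
Set Implicit Arguments.

Section Lat.
Variables (T : Type) (j mt : T -> T -> T).
Hypotheses (jA : forall x y z, j x (j y z) = j (j x y) z)
  (mA : forall x y z, mt x (mt y z) = mt (mt x y) z)
  (jC : forall x y, j x y = j y x) (mC : forall x y, mt x y = mt y x)
  (absJ : forall x y, j x (mt x y) = x) (absM : forall x y, mt x (j x y) = x).

Definition le x y := j x y = y.

Lemma jxx x : j x x = x.
Proof. transitivity (j x (mt x (j x x))); [now rewrite absM | apply absJ]. Qed.
Lemma mxx x : mt x x = x.
Proof. transitivity (mt x (j x (mt x x))); [now rewrite absJ | apply absM]. Qed.
Lemma le_refl x : le x x.
Proof. apply jxx. Qed.
Lemma le_trans x y z : le x y -> le y z -> le x z.
Proof. unfold le; intros H1 H2. rewrite <- H2, jA, H1. reflexivity. Qed.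
Lemma le_anti x y : le x y -> le y x -> x = y.
Proof. unfold le; intros H1 H2. rewrite <- H2, jC. exact H1. Qed.
Lemma le_jl x y : le x (j x y).
Proof. unfold le. rewrite jA, jxx. reflexivity. Qed.
Lemma le_jr x y : le y (j x y).
Proof. rewrite jC. apply le_jl. Qed.
Lemma j_lub x y z : le x z -> le y z -> le (j x y) z.
Proof. unfold le; intros H1 H2. rewrite <- jA, H2, H1. reflexivity. Qed.
Lemma le_meet x y : le x y <-> mt x y = x.
Proof. unfold le; split; intro H.
 - rewrite <- H. apply absM.
 - rewrite <- H. rewrite jC, mC. apply absJ. Qed.
Lemma le_ml x y : le (mt x y) x.
Proof. apply le_meet. rewrite mC, mA, mxx. reflexivity. Qed.
Lemma le_mr x y : le (mt x y) y.
Proof. rewrite mC. apply le_ml. Qed.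
Lemma m_glb x y z : le z x -> le z y -> le z (mt x y).
Proof. rewrite !le_meet. intros H1 H2. rewrite mA, H1, H2. reflexivity. Qed.
Lemma le_jE x y : le x y -> j x y = y.
Proof. auto. Qed.
Lemma le_mE x y : le x y -> mt x y = x.
Proof. apply le_meet. Qed.
Lemma le_mE' x y : le x y -> mt y x = x.
Proof. rewrite mC. apply le_meet. Qed.
Lemma le_jE' x y : le x y -> j y x = y.
Proof. rewrite jC. auto. Qed.
End Lat.

Section Mon.
Variables (T : Type) (ad : T -> T -> T) (z : T).
Hypotheses (aA : forall x y w, ad x (ad y w) = ad (ad x y) w)
  (aC : forall x y, ad x y = ad y x) (a0 : forall x, ad x z = x).
Lemma a0l x : ad z x = x. Proof. rewrite aC. apply a0. Qed.
Lemma aCA x y w : ad x (ad y w) = ad y (ad x w).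
Proof. rewrite !aA, (aC x y). reflexivity. Qed.
Lemma aAC x y w : ad (ad x y) w = ad (ad x w) y.
Proof. rewrite <- !aA, (aC y w). reflexivity. Qed.
Lemma a4 x y v w : ad (ad x y) (ad v w) = ad (ad x v) (ad y w).
Proof. rewrite <- !aA. f_equal. apply aCA. Qed.
End Mon.

Section MV.
Variables (B : Type) (V : MVAlgebra B).
Local Notation o := (mv_oplus V).
Local Notation n := (mv_neg V).
Local Notation d := (mv_odot V).
Local Notation z := (mv_zero V).

Lemma mv_o0l x : o z x = x.
Proof. rewrite mv_oplusC. apply mv_oplus0. Qed.
Lemma mv_nx_x x : o (n x) x = n z.
Proof.
  pose proof (mv_luk V (n z) x) as H.
  rewrite mv_negK, mv_o0l in H.
  rewrite (mv_oplus_neg0 V (n x)) in H. rewrite mv_negK, mv_o0l in H. exact H.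
Qed.
Lemma mv_ident x w : x = o (d (o x w) (n w)) (d x w).
Proof.
  set (Bb := d x w).
  assert (Hi : d (o x w) (n w) = n (o (n x) Bb)).
  { rewrite mv_odotE, mv_negK. f_equal.
    pose proof (mv_luk V w (n x)) as H. rewrite mv_negK in H.
    unfold Bb. rewrite mv_odotE. rewrite <- H, mv_oplusC.
    rewrite (mv_oplusC V (n w) (n x)). reflexivity. }
  rewrite Hi. rewrite mv_luk.
  assert (Hn : n Bb = o (n x) (n w)). { unfold Bb. rewrite mv_odotE, mv_negK. reflexivity. }
  rewrite Hn. rewrite <- mv_oplusA, (mv_oplusC V (n w) x), mv_oplusA, mv_nx_x.
  rewrite (mv_oplusC V (n z)), mv_oplus_neg0, mv_negK, mv_o0l. reflexivity.
Qed.
Lemma mv_cancel x y w : o x w = o y w -> d x w = d y w -> x = y.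
Proof. intros H1 H2. rewrite (mv_ident x w), (mv_ident y w), H1, H2. reflexivity. Qed.
End MV.

Section Ord.
Variables (T : Type) (R : T -> T -> Prop) (j mt : T -> T -> T).
Hypotheses (Rrefl : forall x, R x x) (Rtrans : forall x y z, R x y -> R y z -> R x z)
  (Ranti : forall x y, R x y -> R y x -> x = y)
  (jl : forall x y, R x (j x y)) (jr : forall x y, R y (j x y))
  (jlub : forall x y z, R x z -> R y z -> R (j x y) z)
  (ml : forall x y, R (mt x y) x) (mr : forall x y, R (mt x y) y)
  (mglb : forall x y z, R z x -> R z y -> R z (mt x y)).
Lemma o_jA x y z : j x (j y z) = j (j x y) z.
Proof. apply Ranti; repeat apply jlub; eauto 6. Qed.
Lemma o_mA x y z : mt x (mt y z) = mt (mt x y) z.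
Proof. apply Ranti; repeat apply mglb; eauto 6. Qed.
Lemma o_jC x y : j x y = j y x.
Proof. apply Ranti; apply jlub; auto. Qed.
Lemma o_mC x y : mt x y = mt y x.
Proof. apply Ranti; apply mglb; auto. Qed.
Lemma o_absJ x y : j x (mt x y) = x.
Proof. apply Ranti; auto. Qed.
Lemma o_absM x y : mt x (j x y) = x.
Proof. apply Ranti; auto. Qed.
Lemma o_le_j x y : j x y = y <-> R x y.
Proof. split; intro H. rewrite <- H; auto. apply Ranti; auto. Qed.
End Ord.
Section AC.
Variables (T : Type) (ad : T -> T -> T) (z : T).
Hypotheses (aA : forall x y w, ad x (ad y w) = ad (ad x y) w)
  (aC : forall x y, ad x y = ad y x) (a0 : forall x, ad x z = x).
Inductive tr := Lf (n : nat) | Nd (l r : tr) | Zr.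
Fixpoint den (env : list T) (t : tr) : T :=
  match t with Lf n => nth n env z | Nd l r => ad (den env l) (den env r) | Zr => z end.
Fixpoint fl (t : tr) : list nat :=
  match t with Lf n => n :: nil | Nd l r => fl l ++ fl r | Zr => nil end.
Definition sumL (env : list T) (l : list nat) : T :=
  fold_right (fun n acc => ad (nth n env z) acc) z l.
Fixpoint ins (n : nat) (l : list nat) : list nat :=
  match l with nil => n :: nil | m :: l' => if Nat.leb n m then n :: l else m :: ins n l' end.
Fixpoint srt (l : list nat) : list nat := match l with nil => nil | n :: l' => ins n (srt l') end.
Lemma sumL_app env l1 l2 : sumL env (l1 ++ l2) = ad (sumL env l1) (sumL env l2).
Proof. induction l1; simpl. rewrite aC, a0. reflexivity. rewrite IHl1, aA. reflexivity. Qed.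
Lemma den_fl env t : den env t = sumL env (fl t).
Proof. induction t; simpl. rewrite a0; reflexivity. rewrite sumL_app, IHt1, IHt2. reflexivity. reflexivity. Qed.
Lemma sumL_ins env n l : sumL env (ins n l) = ad (nth n env z) (sumL env l).
Proof. induction l; simpl. reflexivity. destruct (Nat.leb n a); simpl. reflexivity.
  rewrite IHl, !aA, (aC (nth a env z)). reflexivity. Qed.
Lemma sumL_srt env l : sumL env (srt l) = sumL env l.
Proof. induction l; simpl. reflexivity. rewrite sumL_ins, IHl. reflexivity. Qed.
Lemma ac_ok env t1 t2 : srt (fl t1) = srt (fl t2) -> den env t1 = den env t2.
Proof. intro H. rewrite !den_fl, <- (sumL_srt env (fl t1)), <- (sumL_srt env (fl t2)), H. reflexivity. Qed.
End AC.

Ltac lookup x env := lazymatch env with | (x :: _) => constr:(O) | (_ :: ?e) => let n := lookup x e in constr:(S n) end.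
Ltac collect ad z t env :=
  match t with
  | ?f ?a ?b => let _ := match goal with _ => constr_eq f ad end in
                let e := collect ad z a env in collect ad z b e
  | _ => let _ := match goal with _ => constr_eq t z end in env
  | _ => let _ := lookup t env in env
  | _ => constr:(t :: env)
  end.
Ltac reify ad z env t :=
  match t with
  | ?f ?a ?b => let _ := match goal with _ => constr_eq f ad end in
                let ra := reify ad z env a in let rb := reify ad z env b in constr:(Nd ra rb)
  | _ => let _ := match goal with _ => constr_eq t z end in constr:(Zr)
  | _ => let n := lookup t env in constr:(Lf n)
  end.
Ltac ac_eq ad z aA aC a0 :=
  lazymatch goal with |- ?X = ?Y =>
    let Ty := type of z in
    let e1 := collect ad z X (@nil Ty) in let env := collect ad z Y e1 in
    let tx := reify ad z env X in let ty := reify ad z env Y in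
    change (den ad z env tx = den ad z env ty); apply (ac_ok ad z aA aC a0); vm_compute; reflexivity
  end.
Section MLem.
Variables (M : Type) (A : UCDLMonoid M).
Local Notation "x ⊞ y" := (m_add A x y) (at level 50, left associativity).
Local Notation "x ⊔ y" := (m_join A x y) (at level 40, left associativity).
Local Notation "x ⊓ y" := (m_meet A x y) (at level 40, left associativity).
Local Notation u := (m_one A).
Local Notation mu := (m_mone A).
Local Notation z0 := (m_zero A).
Local Notation mle := (le (m_join A)).

Definition nu n := Nat.iter n (m_add A u) z0.
Definition nm n := Nat.iter n (m_add A mu) z0.

Let jA := m_joinA A. Let mA := m_meetA A. Let jC := m_joinC A. Let mC := m_meetC A.
Let absJ := m_absJ A. Let absM := m_absM A.
Let aA := m_addA A. Let aC := m_addC A. Let a0 := m_add0 A.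

Lemma Mle_refl x : mle x x. Proof. exact (le_refl _ _ jC absJ absM x). Qed.
Lemma Mle_trans x y z : mle x y -> mle y z -> mle x z. Proof. exact (@le_trans _ _ jA x y z). Qed.
Lemma Mle_anti x y : mle x y -> mle y x -> x = y. Proof. exact (@le_anti _ _ jC x y). Qed.
Lemma Mle_jl x y : mle x (x ⊔ y). Proof. exact (le_jl _ _ jA jC absJ absM x y). Qed.
Lemma Mle_jr x y : mle y (x ⊔ y). Proof. exact (le_jr _ _ jA jC absJ absM x y). Qed.
Lemma Mj_lub x y w : mle x w -> mle y w -> mle (x ⊔ y) w. Proof. exact (@j_lub _ _ jA x y w). Qed.
Lemma Mle_meet x y : mle x y <-> x ⊓ y = x. Proof. exact (le_meet _ _ jC mC absJ absM x y). Qed.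
Lemma Mle_ml x y : mle (x ⊓ y) x. Proof. exact (le_ml _ _ mA jC mC absJ absM x y). Qed.
Lemma Mle_mr x y : mle (x ⊓ y) y. Proof. exact (le_mr _ _ mA jC mC absJ absM x y). Qed.
Lemma Mm_glb x y w : mle w x -> mle w y -> mle w (x ⊓ y). Proof. exact (@m_glb _ _ _ mA jC mC absJ absM x y w). Qed.

Lemma Ma0l x : z0 ⊞ x = x. Proof. apply a0l; auto. Qed.
Lemma MaCA x y w : x ⊞ (y ⊞ w) = y ⊞ (x ⊞ w). Proof. apply aCA; auto. Qed.
Lemma MaAC x y w : x ⊞ y ⊞ w = x ⊞ w ⊞ y. Proof. apply aAC; auto. Qed.
Lemma Ma4 x y v w : (x ⊞ y) ⊞ (v ⊞ w) = (x ⊞ v) ⊞ (y ⊞ w). Proof. apply a4; auto. Qed.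

Lemma MaddJr x y w : (x ⊔ y) ⊞ w = (x ⊞ w) ⊔ (y ⊞ w).
Proof. rewrite aC, m_addJ, (aC w x), (aC w y). reflexivity. Qed.
Lemma MaddMr x y w : (x ⊓ y) ⊞ w = (x ⊞ w) ⊓ (y ⊞ w).
Proof. rewrite aC, m_addM, (aC w x), (aC w y). reflexivity. Qed.

Lemma Mle_add x y w : mle x y -> mle (x ⊞ w) (y ⊞ w).
Proof. unfold le. intro H. rewrite <- MaddJr, H. reflexivity. Qed.
Lemma Mle_add2 x y v w : mle x y -> mle v w -> mle (x ⊞ v) (y ⊞ w).
Proof. intros H1 H2. apply (le_trans jA) with (y ⊞ v). apply Mle_add; auto.
  rewrite (aC y v), (aC y w). apply Mle_add; auto. Qed.

Lemma Mumu x : x ⊞ u ⊞ mu = x.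
Proof. rewrite <- aA, (aC u mu), m_mone_one, a0. reflexivity. Qed.
Lemma Mmuu x : x ⊞ mu ⊞ u = x.
Proof. rewrite <- aA, m_mone_one, a0. reflexivity. Qed.

Lemma M0u : mle z0 u. Proof. apply m_zero_le1. Qed.
Lemma Mmu0 : mle mu z0. Proof. apply m_mone_le0. Qed.

Lemma nu_add n k : nu n ⊞ nu k = nu (n + k).
Proof. induction n; simpl. apply Ma0l. unfold nu in *; simpl. rewrite <- aA, IHn. reflexivity. Qed.
Lemma nm_add n k : nm n ⊞ nm k = nm (n + k).
Proof. induction n; simpl. apply Ma0l. unfold nm in *; simpl. rewrite <- aA, IHn. reflexivity. Qed.
Lemma nu_nm n : nu n ⊞ nm n = z0.
Proof. induction n. apply a0. unfold nu, nm in *; simpl.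
  rewrite Ma4, (aC u mu), m_mone_one, IHn. apply a0. Qed.

Lemma nuS n : nu (S n) = u ⊞ nu n. Proof. reflexivity. Qed.
Lemma nmS n : nm (S n) = mu ⊞ nm n. Proof. reflexivity. Qed.
Lemma nu_ge0 n : mle z0 (nu n).
Proof. induction n. apply Mle_refl. rewrite nuS. apply Mle_trans with (z0 ⊞ z0).
  rewrite a0; apply Mle_refl. apply Mle_add2; auto. apply M0u. Qed.
Lemma nm_le0 n : mle (nm n) z0.
Proof. induction n. apply Mle_refl. rewrite nmS. apply Mle_trans with (z0 ⊞ z0).
  apply Mle_add2; auto. apply Mmu0. rewrite a0; apply Mle_refl. Qed.
Lemma nu_mono n k : mle (nu n) (nu (n + k)).
Proof. rewrite <- nu_add. apply Mle_trans with (nu n ⊞ z0). rewrite a0; apply Mle_refl.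
  apply Mle_add2. apply Mle_refl. apply nu_ge0. Qed.
Lemma nm_mono n k : mle (nm (n + k)) (nm n).
Proof. rewrite <- nm_add. apply Mle_trans with (nm n ⊞ z0). 
  apply Mle_add2. apply Mle_refl. apply nm_le0. rewrite a0; apply Mle_refl. Qed.
Lemma bound x : exists N, mle (nm N) x /\ mle x (nu N).
Proof. destruct (m_bounded A x) as [n [_ [H1 H2]]]. exists n. split; assumption. Qed.
Lemma bound2 x y : exists N, mle (nm N) x /\ mle x (nu N) /\ mle (nm N) y /\ mle y (nu N).
Proof. destruct (bound x) as [n1 [H1 H2]]. destruct (bound y) as [n2 [H3 H4]].
  exists (n1 + n2). repeat split.
  - eapply Mle_trans; [apply nm_mono|exact H1].
  - eapply Mle_trans; [exact H2|apply nu_mono].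
  - rewrite Nat.add_comm. eapply Mle_trans; [apply nm_mono|exact H3].
  - rewrite Nat.add_comm. eapply Mle_trans; [exact H4|apply nu_mono]. Qed.

Lemma Dec c : c = (c ⊓ u) ⊞ ((c ⊞ mu) ⊔ z0).
Proof. apply Mle_anti.
  - rewrite MaddMr. apply Mm_glb.
    + rewrite m_addJ, a0. apply Mle_jr.
    + rewrite m_addJ, aA, (aC u c), Mumu. apply Mle_jl.
  - rewrite m_addJ, a0. apply Mj_lub. 2: apply Mle_ml.
    rewrite MaddMr. eapply Mle_trans. apply Mle_mr. rewrite aA, (aC u c), Mumu. apply Mle_refl.
Qed.

Lemma distcancel x y c : x ⊔ c = y ⊔ c -> x ⊓ c = y ⊓ c -> x = y.
Proof. intros H1 H2. transitivity (x ⊓ (x ⊔ c)). symmetry; apply absM.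
  rewrite H1, m_distr, H2, (mC x y), <- m_distr, H1, absM. reflexivity. Qed.

Lemma jU x : x ⊔ u = ((x ⊞ mu) ⊔ z0) ⊞ u.
Proof. rewrite MaddJr, Mmuu, Ma0l. reflexivity. Qed.

Section GC.
Hypothesis gcanc : forall x y w, in_Gamma A x -> in_Gamma A y -> in_Gamma A w -> x ⊞ w = y ⊞ w -> x = y.

Lemma inG_mu x : mle z0 x -> in_Gamma A (x ⊓ u).
Proof. intro H. split. exact (Mm_glb H M0u). exact (Mle_mr x u). Qed.

Lemma B3n w (Gw : in_Gamma A w) n : forall a b, mle z0 a -> mle a (nu n) -> mle z0 b -> mle b (nu n) -> a ⊞ w = b ⊞ w -> a = b.
Proof. induction n; intros a b Ha0 Ha1 Hb0 Hb1 H.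
  - transitivity (m_zero A). apply Mle_anti; auto. symmetry; apply Mle_anti; auto.
  - assert (E1 : a ⊓ u = b ⊓ u).
    { apply gcanc with w; auto using inG_mu. rewrite !MaddMr, H. reflexivity. }
    assert (E2 : (a ⊞ mu) ⊔ z0 = (b ⊞ mu) ⊔ z0).
    { apply IHn.
      - apply Mle_jr.
      - apply Mj_lub. 2: apply nu_ge0. eapply Mle_trans; [apply Mle_add; exact Ha1 |].
        rewrite nuS, (aC u), Mumu. apply Mle_refl.
      - apply Mle_jr.
      - apply Mj_lub. 2: apply nu_ge0. eapply Mle_trans; [apply Mle_add; exact Hb1 |].
        rewrite nuS, (aC u), Mumu. apply Mle_refl.
      - rewrite !MaddJr, (MaAC a), (MaAC b), H. reflexivity. }
    apply distcancel with u; auto. rewrite jU, E2, <- jU. reflexivity.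
Qed.

Lemma B3 w (Gw : in_Gamma A w) a b : a ⊞ w = b ⊞ w -> a = b.
Proof. intro H. destruct (bound2 a b) as [N [H1 [H2 [H3 H4]]]].
  assert (E : a ⊞ nu N = b ⊞ nu N).
  { apply B3n with w (N + N); auto.
    - apply Mle_trans with (nm N ⊞ nu N). rewrite aC, nu_nm; apply Mle_refl. apply Mle_add; auto.
    - rewrite <- nu_add. apply Mle_add; auto.
    - apply Mle_trans with (nm N ⊞ nu N). rewrite aC, nu_nm; apply Mle_refl. apply Mle_add; auto.
    - rewrite <- nu_add. apply Mle_add; auto.
    - rewrite (MaAC a), (MaAC b), H. reflexivity. }
  rewrite <- (a0 a), <- (a0 b), <- (nu_nm N), !aA, E. reflexivity.
Qed.

Lemma Rm m : forall c, mle z0 c -> mle c (nu m) -> forall a b, a ⊞ c = b ⊞ c -> a = b.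
Proof. induction m; intros c Hc0 Hc1 a b H.
  - assert (c = z0) by (apply Mle_anti; auto). subst c. rewrite !a0 in H. exact H.
  - rewrite (Dec c) in H. apply IHm with ((c ⊞ mu) ⊔ z0).
    + apply Mle_jr.
    + apply Mj_lub. 2: apply nu_ge0. eapply Mle_trans; [apply Mle_add; exact Hc1 |].
      rewrite nuS, (aC u), Mumu. apply Mle_refl.
    + apply B3 with (c ⊓ u). apply inG_mu; auto.
      rewrite <- !aA, (aC _ (c ⊓ u)). exact H.
Qed.

Lemma Mcanc a b c : a ⊞ c = b ⊞ c -> a = b.
Proof. intro H. destruct (bound c) as [N [H1 H2]].
  apply Rm with (N + N) (c ⊞ nu N).
  - apply Mle_trans with (nm N ⊞ nu N). rewrite aC, nu_nm; apply Mle_refl. apply Mle_add; auto.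
  - rewrite <- nu_add. apply Mle_add; auto.
  - rewrite !aA, H. reflexivity.
Qed.
End GC.
End MLem.
Section Groth.
Variables (M : Type) (A : UCDLMonoid M).
Local Notation "x ⊞ y" := (m_add A x y) (at level 50, left associativity).
Local Notation "x ⊔ y" := (m_join A x y) (at level 40, left associativity).
Local Notation "x ⊓ y" := (m_meet A x y) (at level 40, left associativity).
Local Notation u := (m_one A).
Local Notation mu := (m_mone A).
Local Notation z0 := (m_zero A).
Local Notation mle := (le (m_join A)).
Hypothesis canc : forall a b c, a ⊞ c = b ⊞ c -> a = b.
Let aA := m_addA A. Let aC := m_addC A. Let a0 := m_add0 A.
Ltac acm := ac_eq (m_add A) (m_zero A) (m_addA A) (m_addC A) (m_add0 A).
Lemma mle_eq X X' Y Y' : X' = X -> Y' = Y -> mle X' Y' -> mle X Y.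
Proof. intros; subst; auto. Qed.
Ltac mrw X Y := apply (mle_eq (X':=X) (Y':=Y)); [acm|acm|].

Lemma ord_canc a b c : mle (a ⊞ c) (b ⊞ c) -> mle a b.
Proof. unfold le. intro H. apply canc with c. rewrite MaddJr. exact H. Qed.

Definition P := (M * M)%type.
Definition eqv (p q : P) := fst p ⊞ snd q = fst q ⊞ snd p.
Definition ple (p q : P) := mle (fst p ⊞ snd q) (fst q ⊞ snd p).
Definition padd (p q : P) : P := (fst p ⊞ fst q, snd p ⊞ snd q).
Definition popp (p : P) : P := (snd p, fst p).
Definition pjoin (p q : P) : P := ((fst p ⊞ snd q) ⊔ (fst q ⊞ snd p), snd p ⊞ snd q).
Definition pmeet (p q : P) : P := ((fst p ⊞ snd q) ⊓ (fst q ⊞ snd p), snd p ⊞ snd q).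

Lemma eqv_refl p : eqv p p. Proof. reflexivity. Qed.
Lemma eqv_sym p q : eqv p q -> eqv q p. Proof. unfold eqv; auto. Qed.
Lemma eqv_trans p q r : eqv p q -> eqv q r -> eqv p r.
Proof. destruct p as [p1 p2], q as [q1 q2], r as [r1 r2]; unfold eqv; simpl; intros H1 H2.
  apply canc with (q1 ⊞ q2).
  transitivity ((p1 ⊞ q2) ⊞ (q1 ⊞ r2)).
  rewrite (Ma4 A p1 q2 q1 r2), (Ma4 A p1 r2 q1 q2), (aC q2 r2). reflexivity.
  rewrite H1, H2. rewrite (Ma4 A q1 p2 r1 q2), (Ma4 A r1 p2 q1 q2), (aC q1 r1). reflexivity.
Qed.
Lemma ple_refl p : ple p p. Proof. apply Mle_refl. Qed.
Lemma ple_trans p q r : ple p q -> ple q r -> ple p r.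
Proof. destruct p as [p1 p2], q as [q1 q2], r as [r1 r2]; unfold ple; simpl; intros H1 H2.
  apply ord_canc with (q1 ⊞ q2).
  mrw ((p1 ⊞ q2) ⊞ (q1 ⊞ r2)) ((q1 ⊞ p2) ⊞ (r1 ⊞ q2)). exact (Mle_add2 A H1 H2).
Qed.
Lemma ple_anti p q : ple p q -> ple q p -> eqv p q.
Proof. unfold ple, eqv. intros. apply Mle_anti with A; auto. Qed.
Lemma eqv_ple p q : eqv p q -> ple p q.
Proof. unfold ple, eqv. intro H. rewrite H. apply Mle_refl. Qed.
Lemma ple_resp p p' q q' : eqv p p' -> eqv q q' -> ple p q -> ple p' q'.
Proof. intros H1 H2 H. apply ple_trans with p. apply eqv_ple, eqv_sym; auto.
  apply ple_trans with q; auto. apply eqv_ple; auto. Qed.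

Lemma padd_resp p p' q q' : eqv p p' -> eqv q q' -> eqv (padd p q) (padd p' q').
Proof. destruct p as [p1 p2], q as [q1 q2], p' as [r1 r2], q' as [s1 s2]; unfold eqv; simpl; intros H1 H2.
  rewrite (Ma4 A p1 q1 r2 s2), H1, H2, (Ma4 A r1 p2 s1 q2). reflexivity. Qed.
Lemma popp_resp p p' : eqv p p' -> eqv (popp p) (popp p').
Proof. destruct p as [p1 p2], p' as [r1 r2]; unfold eqv; simpl; intros H1.
  rewrite (aC p2), (aC r2). auto. Qed.
Lemma ple_add p q r : ple p q -> ple (padd p r) (padd q r).
Proof. destruct p as [p1 p2], q as [q1 q2], r as [r1 r2]; unfold ple; simpl; intros H.
  rewrite (Ma4 A p1 r1 q2 r2), (Ma4 A q1 r1 p2 r2). apply Mle_add. exact H. Qed.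

Lemma pj_l p q : ple p (pjoin p q).
Proof. destruct p as [p1 p2], q as [q1 q2]; unfold ple; simpl.
  mrw ((p1 ⊞ q2) ⊞ p2) (((p1 ⊞ q2) ⊔ (q1 ⊞ p2)) ⊞ p2). apply Mle_add, Mle_jl. Qed.
Lemma pj_r p q : ple q (pjoin p q).
Proof. destruct p as [p1 p2], q as [q1 q2]; unfold ple; simpl.
  mrw ((q1 ⊞ p2) ⊞ q2) (((p1 ⊞ q2) ⊔ (q1 ⊞ p2)) ⊞ q2). apply Mle_add, Mle_jr. Qed.
Lemma pj_lub p q r : ple p r -> ple q r -> ple (pjoin p q) r.
Proof. destruct p as [p1 p2], q as [q1 q2], r as [r1 r2]; unfold ple; simpl; intros H1 H2.
  rewrite MaddJr. apply Mj_lub.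
  - mrw ((p1 ⊞ r2) ⊞ q2) ((r1 ⊞ p2) ⊞ q2). apply Mle_add. exact H1.
  - mrw ((q1 ⊞ r2) ⊞ p2) ((r1 ⊞ q2) ⊞ p2). apply Mle_add. exact H2.
Qed.
Lemma pm_l p q : ple (pmeet p q) p.
Proof. destruct p as [p1 p2], q as [q1 q2]; unfold ple; simpl.
  rewrite MaddMr. eapply Mle_trans. apply Mle_ml. mrw (p1 ⊞ p2 ⊞ q2) (p1 ⊞ p2 ⊞ q2). apply Mle_refl. Qed.
Lemma pm_r p q : ple (pmeet p q) q.
Proof. destruct p as [p1 p2], q as [q1 q2]; unfold ple; simpl.
  rewrite MaddMr. eapply Mle_trans. apply Mle_mr. mrw (q1 ⊞ p2 ⊞ q2) (q1 ⊞ p2 ⊞ q2). apply Mle_refl. Qed.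
Lemma pm_glb p q r : ple r p -> ple r q -> ple r (pmeet p q).
Proof. destruct p as [p1 p2], q as [q1 q2], r as [r1 r2]; unfold ple; simpl; intros H1 H2.
  rewrite MaddMr. apply Mm_glb.
  - mrw ((r1 ⊞ p2) ⊞ q2) ((p1 ⊞ r2) ⊞ q2). apply Mle_add. exact H1.
  - mrw ((r1 ⊞ q2) ⊞ p2) ((q1 ⊞ r2) ⊞ p2). apply Mle_add. exact H2.
Qed.
Lemma pjoin_resp p p' q q' : eqv p p' -> eqv q q' -> eqv (pjoin p q) (pjoin p' q').
Proof. intros H1 H2. apply ple_anti; apply pj_lub.
  - apply ple_trans with p'. apply eqv_ple; auto. apply pj_l.
  - apply ple_trans with q'. apply eqv_ple; auto. apply pj_r.
  - apply ple_trans with p. apply eqv_ple, eqv_sym; auto. apply pj_l.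
  - apply ple_trans with q. apply eqv_ple, eqv_sym; auto. apply pj_r.
Qed.
Lemma pmeet_resp p p' q q' : eqv p p' -> eqv q q' -> eqv (pmeet p q) (pmeet p' q').
Proof. intros H1 H2. apply ple_anti; apply pm_glb.
  - apply ple_trans with p. apply pm_l. apply eqv_ple; auto.
  - apply ple_trans with q. apply pm_r. apply eqv_ple; auto.
  - apply ple_trans with p'. apply pm_l. apply eqv_ple, eqv_sym; auto.
  - apply ple_trans with q'. apply pm_r. apply eqv_ple, eqv_sym; auto.
Qed.
Definition pz : P := (z0, z0).
Definition norm (p : P) : P := epsilon (inhabits pz) (fun q => eqv q p).
Lemma norm_spec p : eqv (norm p) p.
Proof. unfold norm. apply (epsilon_spec (inhabits pz) (fun q => eqv q p)). exists p. apply eqv_refl. Qed.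
Lemma norm_eq p q : eqv p q -> norm p = norm q.
Proof. intro H. unfold norm. f_equal. apply functional_extensionality. intro r.
  apply propositional_extensionality. split; intro H'.
  apply eqv_trans with p; auto. apply eqv_trans with q; auto. apply eqv_sym; auto. Qed.
Definition G := {p : P | norm p = p}.
Lemma norm_idem p : norm (norm p) = norm p.
Proof. apply norm_eq, norm_spec. Qed.
Definition mk (p : P) : G := exist _ (norm p) (norm_idem p).
Lemma G_ext (x y : G) : eqv (proj1_sig x) (proj1_sig y) -> x = y.
Proof. destruct x as [p hp], y as [q hq]; simpl; intro H.
  assert (p = q) by (rewrite <- hp, <- hq; apply norm_eq; auto). subst q.
  f_equal. apply proof_irrelevance. Qed.
Lemma mk_val p : eqv (proj1_sig (mk p)) p.
Proof. apply norm_spec. Qed.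
Lemma mk_eq p q : eqv p q -> mk p = mk q.
Proof. intro H. apply G_ext. apply eqv_trans with p. apply mk_val.
  apply eqv_trans with q; auto. apply eqv_sym, mk_val. Qed.
Lemma mk_inj p q : mk p = mk q -> eqv p q.
Proof. intro H. apply eqv_trans with (proj1_sig (mk p)). apply eqv_sym, mk_val.
  rewrite H. apply mk_val. Qed.
Lemma mk_surj (x : G) : x = mk (proj1_sig x).
Proof. apply G_ext. apply eqv_sym, mk_val. Qed.

Definition gadd (x y : G) : G := mk (padd (proj1_sig x) (proj1_sig y)).
Definition gopp (x : G) : G := mk (popp (proj1_sig x)).
Definition gjoin (x y : G) : G := mk (pjoin (proj1_sig x) (proj1_sig y)).
Definition gmeet (x y : G) : G := mk (pmeet (proj1_sig x) (proj1_sig y)).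
Definition gzero : G := mk pz.
Definition gone : G := mk (u, z0).
Definition gle (x y : G) := ple (proj1_sig x) (proj1_sig y).

Lemma gadd_mk p q : gadd (mk p) (mk q) = mk (padd p q).
Proof. apply mk_eq, padd_resp; apply mk_val. Qed.
Lemma gopp_mk p : gopp (mk p) = mk (popp p).
Proof. apply mk_eq, popp_resp; apply mk_val. Qed.
Lemma gjoin_mk p q : gjoin (mk p) (mk q) = mk (pjoin p q).
Proof. apply mk_eq, pjoin_resp; apply mk_val. Qed.
Lemma gmeet_mk p q : gmeet (mk p) (mk q) = mk (pmeet p q).
Proof. apply mk_eq, pmeet_resp; apply mk_val. Qed.
Lemma gle_mk p q : gle (mk p) (mk q) <-> ple p q.
Proof. unfold gle. split; apply ple_resp; try apply mk_val; apply eqv_sym, mk_val. Qed.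

Lemma gle_refl x : gle x x. Proof. apply ple_refl. Qed.
Lemma gle_trans x y w : gle x y -> gle y w -> gle x w. Proof. apply ple_trans. Qed.
Lemma gle_anti x y : gle x y -> gle y x -> x = y. Proof. intros. apply G_ext, ple_anti; auto. Qed.
Lemma gj_l x y : gle x (gjoin x y).
Proof. rewrite (mk_surj x), (mk_surj y), gjoin_mk, gle_mk. apply pj_l. Qed.
Lemma gj_r x y : gle y (gjoin x y).
Proof. rewrite (mk_surj x), (mk_surj y), gjoin_mk, gle_mk. apply pj_r. Qed.
Lemma gj_lub x y w : gle x w -> gle y w -> gle (gjoin x y) w.
Proof. rewrite (mk_surj x), (mk_surj y), (mk_surj w), gjoin_mk, !gle_mk. apply pj_lub. Qed.
Lemma gm_l x y : gle (gmeet x y) x.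
Proof. rewrite (mk_surj x), (mk_surj y), gmeet_mk, gle_mk. apply pm_l. Qed.
Lemma gm_r x y : gle (gmeet x y) y.
Proof. rewrite (mk_surj x), (mk_surj y), gmeet_mk, gle_mk. apply pm_r. Qed.
Lemma gm_glb x y w : gle w x -> gle w y -> gle w (gmeet x y).
Proof. rewrite (mk_surj x), (mk_surj y), (mk_surj w), gmeet_mk, !gle_mk. apply pm_glb. Qed.

Ltac gsurj := repeat match goal with x : G |- _ => rewrite (mk_surj x); generalize (proj1_sig x); clear x; intro end.

Ltac pdes := repeat match goal with p : P |- _ => destruct p end;
  unfold eqv, ple, padd, popp, pjoin, pmeet, pz; simpl.

Lemma GaddA x y w : gadd x (gadd y w) = gadd (gadd x y) w.
Proof. gsurj. rewrite !gadd_mk. apply mk_eq. pdes. acm. Qed.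
Lemma GaddC x y : gadd x y = gadd y x.
Proof. gsurj. rewrite !gadd_mk. apply mk_eq. pdes. acm. Qed.
Lemma Gadd0 x : gadd x gzero = x.
Proof. gsurj. unfold gzero. rewrite !gadd_mk. apply mk_eq. pdes. acm. Qed.
Lemma GaddN x : gadd x (gopp x) = gzero.
Proof. gsurj. unfold gzero. rewrite gopp_mk, !gadd_mk. apply mk_eq. pdes. acm. Qed.

Ltac oapp L := eapply L; first [exact gle_refl | exact gle_trans | exact gle_anti | exact gj_l | exact gj_r | exact gj_lub | exact gm_l | exact gm_r | exact gm_glb].
Lemma GjA x y w : gjoin x (gjoin y w) = gjoin (gjoin x y) w.
Proof. oapp o_jA. Qed.
Lemma GmA x y w : gmeet x (gmeet y w) = gmeet (gmeet x y) w.
Proof. oapp o_mA. Qed.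
Lemma GjC x y : gjoin x y = gjoin y x.
Proof. oapp o_jC. Qed.
Lemma GmC x y : gmeet x y = gmeet y x.
Proof. oapp o_mC. Qed.
Lemma GabsJ x y : gjoin x (gmeet x y) = x.
Proof. oapp o_absJ. Qed.
Lemma GabsM x y : gmeet x (gjoin x y) = x.
Proof. oapp o_absM. Qed.
Lemma Gle_j x y : gjoin x y = y <-> gle x y.
Proof. eapply o_le_j; first [exact gle_refl | exact gle_trans | exact gle_anti | exact gj_l | exact gj_r | exact gj_lub | exact gm_l | exact gm_r | exact gm_glb]. Qed.

Lemma Gmono x y w : gjoin x y = y -> gjoin (gadd x w) (gadd y w) = gadd y w.
Proof. rewrite !Gle_j. gsurj. rewrite !gadd_mk, !gle_mk. apply ple_add. Qed.
Lemma Gone_ge0 : gjoin gzero gone = gone.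
Proof. apply Gle_j. unfold gzero, gone. apply gle_mk. pdes. rewrite !a0. apply M0u. Qed.

Lemma Giter n : Nat.iter n (gadd gone) gzero = mk (nu A n, z0).
Proof. induction n. reflexivity. simpl. rewrite IHn. unfold gone. rewrite gadd_mk.
  apply mk_eq. pdes. rewrite !a0. reflexivity. Qed.
Lemma Gstrong x : exists n, gjoin x (Nat.iter n (gadd gone) gzero) = Nat.iter n (gadd gone) gzero.
Proof. gsurj. destruct p as [p1 p2]. destruct (bound2 A p1 p2) as [N [H1 [H2 [H3 H4]]]].
  exists (N + N). apply Gle_j. rewrite Giter. apply gle_mk. pdes.
  rewrite a0. apply Mle_trans with (y := nu A N). exact H2.
  apply Mle_trans with (y := (nu A N ⊞ nu A N) ⊞ nm A N).
  rewrite <- aA, nu_nm, a0. apply Mle_refl.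
  rewrite nu_add. apply Mle_add2. apply Mle_refl. exact H3.
Qed.

Definition GL : UAbLGroup G :=
  @Build_UAbLGroup G gadd gopp gzero gjoin gmeet gone GaddA GaddC Gadd0 GaddN GjA GmA GjC GmC
    GabsJ GabsM Gmono Gone_ge0 Gstrong.

Lemma groth_embeds : embeds_in_ulgroup A.
Proof. exists G, GL, (fun a => mk (a, z0)). simpl. repeat split.
  - intros x y H. apply mk_inj in H. revert H. pdes. rewrite !a0. auto.
  - intros x y. rewrite gadd_mk. apply mk_eq. pdes. rewrite !a0. reflexivity.
  - intros x y. rewrite gjoin_mk. apply mk_eq. pdes. rewrite !a0. reflexivity.
  - intros x y. rewrite gmeet_mk. apply mk_eq. pdes. rewrite !a0. reflexivity.
  - unfold gone. rewrite gopp_mk. apply mk_eq. pdes. rewrite a0. apply m_mone_one.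
Qed.
End Groth.
Lemma backward (M : Type) (A : UCDLMonoid M) : Gamma_embeds_in_MV A -> embeds_in_ulgroup A.
Proof. intros [B [V [f [Hinj [Hop [Hod [Hj [Hm [H0 H1]]]]]]]]].
  apply groth_embeds. intros a b c. apply Mcanc.
  intros x y w Gx Gy Gw H. apply Hinj; auto.
  apply (mv_cancel V) with (f w).
  - rewrite <- !Hop; auto. unfold Gamma_oplus. rewrite H. reflexivity.
  - rewrite <- !Hod; auto. unfold Gamma_odot. rewrite H. reflexivity.
Qed.
Section Fwd.
Variables (G : Type) (L : UAbLGroup G).
Local Notation "x ⊞ y" := (g_add L x y) (at level 50, left associativity).
Local Notation "x ⊔ y" := (g_join L x y) (at level 40, left associativity).
Local Notation "x ⊓ y" := (g_meet L x y) (at level 40, left associativity).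
Local Notation "⊟ x" := (g_opp L x) (at level 35, right associativity).
Local Notation u := (g_one L).
Local Notation o := (g_zero L).
Local Notation gle := (le (g_join L)).
Let jA := g_joinA L. Let mA := g_meetA L. Let jC := g_joinC L. Let mC := g_meetC L.
Let absJ := g_absJ L. Let absM := g_absM L.
Let aA := g_addA L. Let aC := g_addC L. Let a0 := g_add0 L.
Ltac acg := ac_eq (g_add L) (g_zero L) (g_addA L) (g_addC L) (g_add0 L).

Lemma Gle_refl x : gle x x. Proof. exact (le_refl _ _ jC absJ absM x). Qed.
Lemma Gle_trans x y z : gle x y -> gle y z -> gle x z. Proof. exact (@le_trans _ _ jA x y z). Qed.
Lemma Gle_anti x y : gle x y -> gle y x -> x = y. Proof. exact (@le_anti _ _ jC x y). Qed.
Lemma Gle_jl x y : gle x (x ⊔ y). Proof. exact (le_jl _ _ jA jC absJ absM x y). Qed.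
Lemma Gle_jr x y : gle y (x ⊔ y). Proof. exact (le_jr _ _ jA jC absJ absM x y). Qed.
Lemma Gj_lub x y w : gle x w -> gle y w -> gle (x ⊔ y) w. Proof. exact (@j_lub _ _ jA x y w). Qed.
Lemma Gle_meet x y : gle x y <-> x ⊓ y = x. Proof. exact (le_meet _ _ jC mC absJ absM x y). Qed.
Lemma Gle_mE x y : gle x y -> x ⊓ y = x. Proof. apply Gle_meet. Qed.
Lemma Gle_ml x y : gle (x ⊓ y) x. Proof. exact (le_ml _ _ mA jC mC absJ absM x y). Qed.
Lemma Gle_mr x y : gle (x ⊓ y) y. Proof. exact (le_mr _ _ mA jC mC absJ absM x y). Qed.
Lemma Gm_glb x y w : gle w x -> gle w y -> gle w (x ⊓ y). Proof. exact (@m_glb _ _ _ mA jC mC absJ absM x y w). Qed.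

Lemma Ga0l x : o ⊞ x = x. Proof. rewrite aC; apply a0. Qed.
Lemma GaddK x w : x ⊞ w ⊞ ⊟ w = x. Proof. rewrite <- aA, g_addN, a0. reflexivity. Qed.
Lemma Gle_add x y w : gle x y -> gle (x ⊞ w) (y ⊞ w). Proof. apply g_mono. Qed.
Lemma Gle_add2 x y v w : gle x y -> gle v w -> gle (x ⊞ v) (y ⊞ w).
Proof. intros H1 H2. apply Gle_trans with (y ⊞ v). apply Gle_add; auto.
  rewrite (aC y v), (aC y w). apply Gle_add; auto. Qed.
Lemma Gle_sub x y w : gle (x ⊞ w) y -> gle x (y ⊞ ⊟ w).
Proof. intro H. rewrite <- (GaddK x w). apply Gle_add; auto. Qed.
Lemma Gle_addl x y w : gle x y -> gle (w ⊞ x) (w ⊞ y).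
Proof. rewrite (aC w x), (aC w y). apply Gle_add. Qed.

Lemma Gadd_join w x y : w ⊞ (x ⊔ y) = (w ⊞ x) ⊔ (w ⊞ y).
Proof. apply Gle_anti.
  - apply Gle_trans with (w ⊞ (((w ⊞ x) ⊔ (w ⊞ y)) ⊞ ⊟ w)).
    + apply Gle_addl. apply Gj_lub; apply Gle_sub; [rewrite (aC x w); apply Gle_jl | rewrite (aC y w); apply Gle_jr].
    + rewrite (aC _ (⊟ w)), aA, g_addN, Ga0l. apply Gle_refl.
  - apply Gj_lub; apply Gle_addl; [apply Gle_jl | apply Gle_jr].
Qed.
Lemma Gadd_meet w x y : w ⊞ (x ⊓ y) = (w ⊞ x) ⊓ (w ⊞ y).
Proof. apply Gle_anti.
  - apply Gm_glb; apply Gle_addl; [apply Gle_ml | apply Gle_mr].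
  - apply Gle_trans with (w ⊞ (((w ⊞ x) ⊓ (w ⊞ y)) ⊞ ⊟ w)).
    + rewrite (aC _ (⊟ w)), aA, g_addN, Ga0l. apply Gle_refl.
    + apply Gle_addl. apply Gm_glb.
      * apply Gle_trans with ((w ⊞ x) ⊞ ⊟ w). apply Gle_add, Gle_ml. rewrite (aC w x), GaddK. apply Gle_refl.
      * apply Gle_trans with ((w ⊞ y) ⊞ ⊟ w). apply Gle_add, Gle_mr. rewrite (aC w y), GaddK. apply Gle_refl.
Qed.

Lemma Gopp_uniq x y : x ⊞ y = o -> y = ⊟ x.
Proof. intro H. rewrite <- (Ga0l y), <- (g_addN L x). transitivity ((x ⊞ y) ⊞ ⊟ x). acg. rewrite H, Ga0l. reflexivity. Qed.
Lemma GoppK x : ⊟ ⊟ x = x.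
Proof. symmetry. apply Gopp_uniq. rewrite aC. apply g_addN. Qed.
Lemma GoppD x y : ⊟ (x ⊞ y) = ⊟ x ⊞ ⊟ y.
Proof. symmetry. apply Gopp_uniq. transitivity ((x ⊞ ⊟ x) ⊞ (y ⊞ ⊟ y)). acg. rewrite !g_addN, a0. reflexivity. Qed.
Lemma Gopp0 : ⊟ o = o.
Proof. symmetry. apply Gopp_uniq. apply a0. Qed.
Lemma Gopp_le x y : gle x y -> gle (⊟ y) (⊟ x).
Proof. intro H. pose proof (Gle_add (⊟ x ⊞ ⊟ y) H) as H'.
  replace (x ⊞ (⊟ x ⊞ ⊟ y)) with (⊟ y) in H'. replace (y ⊞ (⊟ x ⊞ ⊟ y)) with (⊟ x) in H'. exact H'.
  transitivity ((y ⊞ ⊟ y) ⊞ ⊟ x). rewrite g_addN, Ga0l; reflexivity. acg.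
  transitivity ((x ⊞ ⊟ x) ⊞ ⊟ y). rewrite g_addN, Ga0l; reflexivity. acg.
Qed.
Lemma Gopp_join x y : ⊟ (x ⊔ y) = ⊟ x ⊓ ⊟ y.
Proof. apply Gle_anti.
  - apply Gm_glb; apply Gopp_le; [apply Gle_jl | apply Gle_jr].
  - rewrite <- (GoppK (⊟ x ⊓ ⊟ y)). apply Gopp_le. apply Gj_lub.
    + rewrite <- (GoppK x) at 1. apply Gopp_le, Gle_ml.
    + rewrite <- (GoppK y) at 1. apply Gopp_le, Gle_mr.
Qed.
Lemma Gopp_meet x y : ⊟ (x ⊓ y) = ⊟ x ⊔ ⊟ y.
Proof. rewrite <- (GoppK (⊟ x ⊔ ⊟ y)), Gopp_join, !GoppK. reflexivity. Qed.

Lemma G01 : gle o u. Proof. apply g_one_ge0. Qed.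

Definition inB (g : G) := gle o g /\ gle g u.
Definition B := {g : G | inB g}.
Lemma B_ext (x y : B) : proj1_sig x = proj1_sig y -> x = y.
Proof. destruct x as [x hx], y as [y hy]; simpl; intro H; subst y. f_equal. apply proof_irrelevance. Qed.

Lemma bo_ok (x y : B) : inB ((proj1_sig x ⊞ proj1_sig y) ⊓ u).
Proof. destruct x as [x [hx1 hx2]], y as [y [hy1 hy2]]; simpl. split.
  - apply Gm_glb. rewrite <- (a0 o). apply Gle_add2; auto. apply G01.
  - apply Gle_mr. Qed.
Lemma bn_ok (x : B) : inB (u ⊞ ⊟ proj1_sig x).
Proof. destruct x as [x [hx1 hx2]]; simpl. split.
  - rewrite <- (g_addN L x). apply Gle_add; auto.
  - rewrite <- (a0 u) at 2. apply Gle_addl. rewrite <- Gopp0. apply Gopp_le; auto. Qed.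
Lemma bz_ok : inB o. Proof. split. apply Gle_refl. apply G01. Qed.

Definition bo (x y : B) : B := exist _ _ (bo_ok x y).
Definition bn (x : B) : B := exist _ _ (bn_ok x).
Definition bz : B := exist _ _ bz_ok.
Definition bd (x y : B) : B := bn (bo (bn x) (bn y)).
Definition bj (x y : B) : B := bo (bd x (bn y)) y.
Definition bm (x y : B) : B := bn (bj (bn x) (bn y)).
Definition bone : B := bn bz.

Lemma L1 a b : gle o a -> (a ⊞ (b ⊓ u)) ⊓ u = (a ⊞ b) ⊓ u.
Proof. intro H. rewrite Gadd_meet, <- mA. f_equal. rewrite mC. apply Gle_mE.
  rewrite <- (Ga0l u) at 1. apply Gle_add; auto. Qed.

Lemma B_oplusA x y w : bo x (bo y w) = bo (bo x y) w.
Proof. apply B_ext. destruct x as [x [hx1 hx2]], y as [y [hy1 hy2]], w as [w [hw1 hw2]]; simpl.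
  rewrite L1; auto. rewrite (aC ((x ⊞ y) ⊓ u) w), L1; auto. f_equal. acg. Qed.
Lemma B_oplusC x y : bo x y = bo y x.
Proof. apply B_ext. simpl. rewrite aC. reflexivity. Qed.
Lemma B_oplus0 x : bo x bz = x.
Proof. apply B_ext. destruct x as [x [hx1 hx2]]; simpl. rewrite a0. apply Gle_mE; auto. Qed.
Lemma Gnn x : u ⊞ ⊟ (u ⊞ ⊟ x) = x.
Proof. rewrite GoppD, GoppK. transitivity ((u ⊞ ⊟ u) ⊞ x). acg. rewrite g_addN, Ga0l. reflexivity. Qed.
Lemma B_negK x : bn (bn x) = x.
Proof. apply B_ext. simpl. apply Gnn. Qed.
Lemma B_oplus_neg0 x : bo x (bn bz) = bn bz.
Proof. apply B_ext. destruct x as [x [hx1 hx2]]; simpl. rewrite Gopp0, a0.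
  rewrite mC. apply Gle_mE. rewrite <- (Ga0l u) at 1. apply Gle_add; auto. Qed.
Lemma LUK a b : ((u ⊞ ⊟ (((u ⊞ ⊟ a) ⊞ b) ⊓ u)) ⊞ b) ⊓ u = (a ⊔ b) ⊓ u.
Proof. f_equal. rewrite Gopp_meet, Gadd_join, g_addN.
  replace (u ⊞ ⊟ (u ⊞ ⊟ a ⊞ b)) with (a ⊞ ⊟ b).
  rewrite aC, Gadd_join, a0. f_equal. rewrite aC, <- aA, (aC _ b), g_addN, a0. reflexivity.
  rewrite !GoppD, GoppK. transitivity ((u ⊞ ⊟ u) ⊞ (a ⊞ ⊟ b)). rewrite g_addN, Ga0l; reflexivity. acg.
Qed.
Lemma B_luk x y : bo (bn (bo (bn x) y)) y = bo (bn (bo (bn y) x)) x.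
Proof. apply B_ext. simpl. rewrite !LUK, jC. reflexivity. Qed.

Definition BV : MVAlgebra B :=
  @Build_MVAlgebra B bo bd bj bm bn bz bone B_oplusA B_oplusC B_oplus0 B_negK B_oplus_neg0 B_luk
    eq_refl (fun _ _ => eq_refl) (fun _ _ => eq_refl) (fun _ _ => eq_refl).

Lemma vo (x y : B) : proj1_sig (bo x y) = (proj1_sig x ⊞ proj1_sig y) ⊓ u. Proof. reflexivity. Qed.
Lemma vn (x : B) : proj1_sig (bn x) = u ⊞ ⊟ proj1_sig x. Proof. reflexivity. Qed.
Lemma vd (x y : B) : proj1_sig (bd x y) = ((proj1_sig x ⊞ proj1_sig y) ⊞ ⊟ u) ⊔ o.
Proof. unfold bd. rewrite vn, vo, !vn. rewrite Gopp_meet, Gadd_join, g_addN. f_equal.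
  rewrite !GoppD, !GoppK. transitivity ((u ⊞ ⊟ u) ⊞ (proj1_sig x ⊞ proj1_sig y ⊞ ⊟ u)). acg.
  rewrite g_addN, Ga0l. reflexivity. Qed.
Lemma vj (x y : B) : proj1_sig (bj x y) = proj1_sig x ⊔ proj1_sig y.
Proof. unfold bj. rewrite vo, vd, vn. destruct x as [x [hx1 hx2]], y as [y [hy1 hy2]]; simpl.
  replace (x ⊞ (u ⊞ ⊟ y) ⊞ ⊟ u) with (x ⊞ ⊟ y).
  2: { transitivity ((u ⊞ ⊟ u) ⊞ (x ⊞ ⊟ y)). rewrite g_addN, Ga0l; reflexivity. acg. }
  rewrite (aC _ y), Gadd_join, a0.
  replace (y ⊞ (x ⊞ ⊟ y)) with x.
  2: { transitivity ((y ⊞ ⊟ y) ⊞ x). rewrite g_addN, Ga0l; reflexivity. acg. }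
  apply Gle_mE. apply Gj_lub; auto. Qed.
Lemma vm (x y : B) : proj1_sig (bm x y) = proj1_sig x ⊓ proj1_sig y.
Proof. unfold bm. rewrite vn, vj, !vn. rewrite Gopp_join, Gadd_meet, !Gnn. reflexivity. Qed.

Lemma clamp_ok g : inB ((g ⊔ o) ⊓ u).
Proof. split. apply Gm_glb. apply Gle_jr. apply G01. apply Gle_mr. Qed.
Definition clamp g : B := exist _ _ (clamp_ok g).
Lemma clamp_of (b : B) g : g = proj1_sig b -> clamp g = b.
Proof. intro H. apply B_ext. subst g. destruct b as [b [h1 h2]]. simpl.
  rewrite jC. unfold le in h1. rewrite h1. apply Gle_mE; auto. Qed.

Lemma fwd_core (M : Type) (A : UCDLMonoid M) (f : M -> G)
  (Hinj : forall x y, f x = f y -> x = y)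
  (Hadd : forall x y, f (m_add A x y) = g_add L (f x) (f y))
  (Hj : forall x y, f (m_join A x y) = g_join L (f x) (f y))
  (Hm : forall x y, f (m_meet A x y) = g_meet L (f x) (f y))
  (Hz : f (m_zero A) = g_zero L) (Hone : f (m_one A) = g_one L)
  (Hmone : f (m_mone A) = g_opp L (g_one L)) : Gamma_embeds_in_MV A.
Proof.
  assert (fG : forall x, in_Gamma A x -> inB (f x)).
  { intros x [H1 H2]. unfold m_le in *. split; unfold le.
    - rewrite <- Hz, <- Hj, H1. reflexivity.
    - rewrite <- Hone, <- Hj, H2. reflexivity. }
  assert (fc : forall x (Gx : in_Gamma A x), clamp (f x) = exist _ (f x) (fG x Gx)).
  { intros. apply clamp_of. reflexivity. }
  exists B, BV, (fun x => clamp (f x)). simpl. repeat split.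
  - intros x y Gx Gy H. rewrite (fc x Gx), (fc y Gy) in H. apply Hinj.
    apply (f_equal (@proj1_sig _ _)) in H. exact H.
  - intros x y Gx Gy. apply clamp_of. rewrite vo, (fc x Gx), (fc y Gy). simpl.
    unfold Gamma_oplus. rewrite Hm, Hadd, Hone. reflexivity.
  - intros x y Gx Gy. apply clamp_of. rewrite vd, (fc x Gx), (fc y Gy). simpl.
    unfold Gamma_odot. rewrite Hj, !Hadd, Hmone, Hz. reflexivity.
  - intros x y Gx Gy. apply clamp_of. rewrite vj, (fc x Gx), (fc y Gy). simpl. apply Hj.
  - intros x y Gx Gy. apply clamp_of. rewrite vm, (fc x Gx), (fc y Gy). simpl. apply Hm.
  - apply clamp_of. rewrite Hz. reflexivity.
  - apply clamp_of. unfold bone. rewrite vn. simpl. rewrite Gopp0, a0. exact Hone.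
Qed.
End Fwd.

Lemma forward (M : Type) (A : UCDLMonoid M) : embeds_in_ulgroup A -> Gamma_embeds_in_MV A.
Proof. intros [G [L [f [H1 [H2 [H3 [H4 [H5 [H6 H7]]]]]]]]]. eapply fwd_core; eauto. Qed.

Theorem mainTheorem5 (M : Type) (A : UCDLMonoid M) :
  embeds_in_ulgroup A <-> Gamma_embeds_in_MV A.
Proof. split. apply forward. apply backward. Qed.
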